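(* Let $N$ be an odd positive integer and $r\ge s\ge 2$. Then the Atkin operator $U$ and the nebentypus action of $\Gamma$ on $(\Phi_r^s)^{\mathrm{ab}}$ commute.
   Context: For $M\ge1$, $\Gamma_1(M)=\{\begin{pmatrix}a&b\\c&d\end{pmatrix}\in\mathrm{SL}_2(\mathbb{Z}) : c\equiv0,\ a\equiv d\equiv1 \pmod M\}$, $\Gamma_0(M)=\{c\equiv 0\pmod M\}$, $\Gamma^0(2)=\{b\equiv0\pmod 2\}$ (inside $\mathrm{SL}_2(\mathbb{Z})$). For $r\ge s\ge2$, $\Phi_r^s:=\Gamma_1(N2^s)\cap\Gamma_0(2^r)$; $G^{\mathrm{ab}}$ denotes abelianization. $\Gamma:=1+4\mathbb{Z}_2$, $\Gamma_r:=1+2^r\mathbb{Z}_2$. Nebentypus action: for $\delta\in\Gamma$, choose $\alpha=\begin{pmatrix}a&b\\c&d\end{pmatrix}\in\Gamma_1(4N)\cap\Gamma_0(2^{r+1})\cap\Gamma^0(2)$ with $d\equiv\delta \bmod \Gamma_r$ (such $\alpha$ exists); $\delta$ acts on $(\Phi_r^s)^{\mathrm{ab}}$ by the map induced by conjugation $x\mapsto\alpha x\alpha^{-1}$, which is independent of the choice of $\alpha$. Atkin operator: with $t=\begin{pmatrix}1&0\\0&2\end{pmatrix}$, $U$ on $(\Phi_r^s)^{\mathrm{ab}}$ is the composite of the transfer $(\Phi_r^s)^{\mathrm{ab}}\to(\Phi_r^s\cap\Gamma^0(2))^{\mathrm{ab}}$, the map induced by the isomorphism $x\mapsto txt^{-1}$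 from $\Phi_r^s\cap\Gamma^0(2)$ onto $\Phi_{r+1}^s$, and the inclusion-induced map $(\Phi_{r+1}^s)^{\mathrm{ab}}\to(\Phi_r^s)^{\mathrm{ab}}$. *)

(* Defs.v *)
From HB Require Import structures.
From mathcomp Require Import all_boot all_order all_algebra.
Set Implicit Arguments. Unset Strict Implicit. Unset Printing Implicit Defensive.
Import GRing.Theory Num.Theory.
Local Open Scope ring_scope.

Notation M2 := 'M[int]_2.

Definition i0 : 'I_2 := ord0.
Definition i1 : 'I_2 := ord_max.

Definition mk2 (a b c d : int) : M2 :=
  \matrix_(i < 2, j < 2)
    if (val i == 0)%N then (if (val j == 0)%N then a else b)
    else (if (val j == 0)%N then c else d).

Definition inSL2 (A : M2) : bool := \det A == 1.

Definition inGamma1 (M : nat) (A : M2) : bool :=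
  [&& inSL2 A, (A i1 i0 == 0 %[mod M%:Z])%Z, (A i0 i0 == 1 %[mod M%:Z])%Z
    & (A i1 i1 == 1 %[mod M%:Z])%Z].

Definition inGamma0 (M : nat) (A : M2) : bool :=
  inSL2 A && (A i1 i0 == 0 %[mod M%:Z])%Z.

Definition inGamma0up2 (A : M2) : bool :=
  inSL2 A && (A i0 i1 == 0 %[mod 2])%Z.

Definition inPhi (N r s : nat) (A : M2) : bool :=
  inGamma1 (N * 2 ^ s) A && inGamma0 (2 ^ r) A.

Definition commg2 (a b : M2) : M2 := invmx a *m invmx b *m a *m b.

(** The commutator subgroup [G,G] of a subgroup G (given by its membership
    predicate): all finite products of commutators of elements of G
    (closed under inverses since [a,b]^-1 = [b,a]). *)
Inductive in_commsub (G : pred M2) : M2 -> Prop :=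
  | commsub1 : in_commsub G 1%:M
  | commsubM a b y : G a -> G b -> in_commsub G y ->
      in_commsub G (commg2 a b *m y).

Definition ab_eq (G : pred M2) (x y : M2) : Prop :=
  in_commsub G (x *m invmx y).

Definition right_transversal (G H : pred M2) (T : seq M2) : Prop :=
  all G T /\ forall y, G y -> count (fun g => H (y *m invmx g)) T = 1%N.

(** Representative of the transfer of x from G to H computed with the right
    transversal T: for each g in T, g x = h_g g' with g' the element of T
    such that g x g'^-1 lies in H; the transfer is the product of the h_g
    (its class in H^ab does not depend on ordering/transversal). *)
Definition transfer_rep (H : pred M2) (T : seq M2) (x : M2) : M2 :=
  foldr (fun g acc =>
    (g *m x *m invmx (nth 1%:M T (find (fun g' => H (g *m x *m invmx g')) T)))
      *m acc) 1%:M T.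

(** Conjugation by t = diag(1,2): [[a,b],[c,d]] |-> [[a, b/2],[2c, d]]
    (integral on Gamma^0(2)). *)
Definition tconj (A : M2) : M2 :=
  mk2 (A i0 i0) ((A i0 i1) %/ 2)%Z (A i1 i0 * 2) (A i1 i1).

(** Representative of the Atkin operator U on (Phi_r^s)^ab, computed with a
    right transversal T of Phi_r^s cap Gamma^0(2) in Phi_r^s: transfer,
    then conjugation by t (landing in Phi_{r+1}^s), then (implicitly) the
    inclusion Phi_{r+1}^s -> Phi_r^s. *)
Definition atkinU_rep (N r s : nat) (T : seq M2) (x : M2) : M2 :=
  tconj (transfer_rep (fun A => inPhi N r s A && inGamma0up2 A) T x).

Definition nebentypus_alpha (N r : nat) (delta : int) (alpha : M2) : bool :=
  [&& inGamma1 (4 * N) alpha, inGamma0 (2 ^ r.+1) alpha, inGamma0up2 alpha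
    & (alpha i1 i1 == delta %[mod (2 ^ r)%:Z])%Z].

(* Main.v *)
Require Import Defs.
From mathcomp Require Import all_boot all_order all_algebra.
From mathcomp Require Import ring lra zify.
Set Implicit Arguments. Unset Strict Implicit. Unset Printing Implicit Defensive.
Import GRing.Theory Num.Theory.
Local Open Scope ring_scope.

Lemma mk2E (A : M2) : A = mk2 (A i0 i0) (A i0 i1) (A i1 i0) (A i1 i1).
Proof.
apply/matrixP => i j; rewrite !mxE.
by case: i => [[|[|//]] Hi]; case: j => [[|[|//]] Hj]; congr (A _ _); apply: val_inj.
Qed.

Lemma mk2M a b c d a' b' c' d' :
  mk2 a b c d *m mk2 a' b' c' d' =
  mk2 (a*a'+b*c') (a*b'+b*d') (c*a'+d*c') (c*b'+d*d').
Proof.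
apply/matrixP => i j; rewrite !mxE !big_ord_recr big_ord0 /= !mxE /=.
by case: i => [[|[|//]] Hi]; case: j => [[|[|//]] Hj]; rewrite /= add0r.
Qed.

Lemma mk2_1 : (1%:M : M2) = mk2 1 0 0 1.
Proof.
apply/matrixP => i j; rewrite !mxE.
by case: i => [[|[|//]] Hi]; case: j => [[|[|//]] Hj].
Qed.

Lemma mk2_entries a b c d :
  [/\ mk2 a b c d i0 i0 = a, mk2 a b c d i0 i1 = b,
      mk2 a b c d i1 i0 = c & mk2 a b c d i1 i1 = d].
Proof. by rewrite !mxE. Qed.

Lemma det_mk2 a b c d : \det (mk2 a b c d) = a * d - b * c.
Proof.
rewrite (expand_det_row _ ord0) !big_ord_recr big_ord0 /= add0r.
rewrite /cofactor !det_mx11 !mxE /=.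
rewrite /bump /=. rewrite !expr0 !expr1 /=. 
ring.
Qed.

Lemma SL_unit (A : M2) : inSL2 A -> A \in unitmx.
Proof. by rewrite /inSL2 unitmxE => /eqP ->; exact: unitr1. Qed.

Lemma inv_uniq (A B : M2) : A \in unitmx -> A *m B = 1%:M -> invmx A = B.
Proof. by move=> U H; rewrite -[B](mulKmx U) H mulmx1. Qed.

Lemma inv_mk2 a b c d : a*d - b*c = 1 -> invmx (mk2 a b c d) = mk2 d (-b) (-c) a.
Proof.
move=> H; apply: inv_uniq; first by apply: SL_unit; rewrite /inSL2 det_mk2 H.
rewrite mk2M mk2_1; congr mk2; [rewrite -H; ring | ring | ring | rewrite -H; ring].
Qed.

Lemma SLE (A : M2) : inSL2 A = (A i0 i0 * A i1 i1 - A i0 i1 * A i1 i0 == 1).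
Proof. by rewrite /inSL2 {1}(mk2E A) det_mk2. Qed.

Definition cm (x y m : int) := exists k, x = y + k * m.

Lemma cmP x y m : (x == y %[mod m])%Z <-> cm x y m.
Proof.
rewrite eqz_mod_dvd; split.
  by move/dvdzP=> [q Hq]; exists q; rewrite -Hq; ring.
by move=> [k ->]; apply/dvdzP; exists k; ring.
Qed.

Definition grp (G : pred M2) :=
  [/\ forall A, G A -> inSL2 A, G 1%:M,
      forall A B, G A -> G B -> G (A *m B) & forall A, G A -> G (invmx A)].

Section Grp.
Variable G : pred M2.
Hypothesis hG : grp G.

Lemma gS A : G A -> inSL2 A. Proof. by case: hG => h _ _ _; apply: h. Qed.
Lemma gU A : G A -> A \in unitmx.
Proof. by case: hG => h _ _ _ /h /SL_unit. Qed.
Lemma gM A B : G A -> G B -> G (A *m B). Proof. by case: hG => _ _ h _; apply: h. Qed.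
Lemma gV A : G A -> G (invmx A). Proof. by case: hG => _ _ _ h; apply: h. Qed.
Lemma gone : G 1%:M. Proof. by case: hG. Qed.

Lemma g_conj z a : G z -> G a -> G (z *m a *m invmx z).
Proof. by move=> Hz Ha; apply: gM; [apply: gM | apply: gV]. Qed.

Lemma cs_mul y z : in_commsub G y -> in_commsub G z -> in_commsub G (y *m z).
Proof.
elim=> [|a b y' Ha Hb _ IH] Hz; first by rewrite mul1mx.
by rewrite -mulmxA; apply: commsubM => //; apply: IH.
Qed.

Lemma cs_G y : in_commsub G y -> G y.
Proof.
elim=> [|a b y' Ha Hb _ IH]; first exact: gone.
by rewrite /commg2; repeat apply: gM => //; apply: gV.
Qed.

Lemma cs_conj z y : G z -> in_commsub G y -> in_commsub G (z *m y *m invmx z).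
Proof.
move=> Hz; have Uz := gU Hz.
elim=> [|a b y' Ha Hb _ IH]; first by rewrite mulmx1 mulmxV //; constructor.
have Ua := gU Ha; have Ub := gU Hb.
have -> : z *m (commg2 a b *m y') *m invmx z =
  commg2 (z *m a *m invmx z) (z *m b *m invmx z) *m (z *m y' *m invmx z).
  have iv : forall c, c \in unitmx -> invmx (z *m c *m invmx z) = z *m invmx c *m invmx z.
    move=> c Uc; apply: inv_uniq.
      by rewrite !unitmx_mul Uz Uc unitmx_inv Uz.
    by rewrite !mulmxA (mulmxKV Uz) (mulmxK Uc) (mulmxV Uz).
  rewrite /commg2 !iv // !mulmxA !(mulmxKV Uz) //.
apply: commsubM => //; by apply: g_conj.
Qed.

Lemma ab_eqE x y : G y -> x = y -> ab_eq G x y.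
Proof. by move=> Hy ->; rewrite /ab_eq mulmxV //; [constructor | apply: gU]. Qed.

Lemma ab_trans x y w : G y -> ab_eq G x y -> ab_eq G y w -> ab_eq G x w.
Proof.
move=> Hy H1 H2; rewrite /ab_eq.
have -> : x *m invmx w = (x *m invmx y) *m (y *m invmx w).
  by rewrite mulmxA (mulmxKV (gU Hy)).
exact: cs_mul.
Qed.

Lemma commg2_cs a b : G a -> G b -> in_commsub G (commg2 a b).
Proof. by move=> Ha Hb; rewrite -[commg2 a b]mulmx1; apply: commsubM => //; constructor. Qed.

Lemma ab_conjL h w : G h -> G w -> ab_eq G (h *m w *m invmx h) w.
Proof.
move=> Hh Hw; rewrite /ab_eq.
have -> : h *m w *m invmx h *m invmx w = commg2 (invmx h) (invmx w).
  by rewrite /commg2 !invmxK.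
by apply: commg2_cs; apply: gV.
Qed.

Lemma ab_conjR h w : G h -> G w -> ab_eq G w (h *m w *m invmx h).
Proof.
move=> Hh Hw; rewrite /ab_eq.
have Uh := gU Hh; have Uw := gU Hw.
have -> : invmx (h *m w *m invmx h) = h *m invmx w *m invmx h.
  apply: inv_uniq; first by rewrite !unitmx_mul Uh Uw unitmx_inv Uh.
  by rewrite !mulmxA (mulmxKV Uh) (mulmxK Uw) (mulmxV Uh).
have -> : w *m (h *m invmx w *m invmx h) = commg2 (invmx w) (invmx h).
  by rewrite /commg2 !invmxK !mulmxA.
by apply: commg2_cs; apply: gV.
Qed.

Lemma ab_mul a a' b b' : G a -> G a' -> G b -> G b' ->
  ab_eq G a a' -> ab_eq G b b' -> ab_eq G (a *m b) (a' *m b').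
Proof.
move=> Ha Ha' Hb Hb' H1 H2; rewrite /ab_eq.
have Ua := gU Ha; have Ua' := gU Ha'; have Ub' := gU Hb'.
have -> : invmx (a' *m b') = invmx b' *m invmx a'.
  apply: inv_uniq; first by rewrite unitmx_mul Ua' Ub'.
  by rewrite !mulmxA (mulmxK Ub') (mulmxV Ua').
have -> : a *m b *m (invmx b' *m invmx a') =
   (a *m (b *m invmx b') *m invmx a) *m (a *m invmx a').
  by rewrite !mulmxA (mulmxKV Ua).
by apply: cs_mul => //; apply: cs_conj.
Qed.

End Grp.

Lemma cm_refl x m : cm x x m. Proof. by exists 0; ring. Qed.
Lemma cmD x y x' y' m : cm x y m -> cm x' y' m -> cm (x + x') (y + y') m.
Proof. by move=> [k ->] [k' ->]; exists (k + k'); ring. Qed.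
Lemma cmM x y x' y' m : cm x y m -> cm x' y' m -> cm (x * x') (y * y') m.
Proof. by move=> [k ->] [k' ->]; exists (k * y' + y * k' + k * k' * m); ring. Qed.
Lemma cmN x y m : cm x y m -> cm (- x) (- y) m.
Proof. by move=> [k ->]; exists (- k); ring. Qed.
Lemma cm_eqr x y y' m : cm x y m -> y = y' -> cm x y' m.
Proof. by move=> H <-. Qed.
Lemma cm_dvd x y m k : cm x y (m * k) -> cm x y m.
Proof. by move=> [q ->]; exists (q * k); ring. Qed.
Lemma cm_dvd' x y m k : cm x y (k * m) -> cm x y m.
Proof. by move=> [q ->]; exists (q * k); ring. Qed.

Ltac cg := first [ eapply cmD; [cg|cg] | eapply cmM; [cg|cg] | eapply cmN; cg
                 | eassumption | apply cm_refl ].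
Ltac cgr := eapply cm_eqr; [cg|].

Goal forall a b m : int, cm a 1 m -> cm b 0 m -> cm (a * a + b * a - b) 1 m.
Proof. move=> a b m Ha Hb. cgr. ring. Qed.

Lemma e00 a b c d : mk2 a b c d i0 i0 = a. Proof. by rewrite !mxE. Qed.
Lemma e01 a b c d : mk2 a b c d i0 i1 = b. Proof. by rewrite !mxE. Qed.
Lemma e10 a b c d : mk2 a b c d i1 i0 = c. Proof. by rewrite !mxE. Qed.
Lemma e11 a b c d : mk2 a b c d i1 i1 = d. Proof. by rewrite !mxE. Qed.
Ltac ents := rewrite ?e00 ?e01 ?e10 ?e11.

Lemma cm_trans x y z m : cm x y m -> cm y z m -> cm x z m.
Proof. by move=> [k ->] [k' ->]; exists (k + k'); ring. Qed.

Lemma det_cm a b c d m : a*d - b*c = 1 -> cm c 0 m -> cm (a*d) 1 m.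
Proof.
move=> H [k Hc]; exists (b * k); rewrite -H Hc; ring.
Qed.

Lemma par (x : int) : exists t : int, x = t * 2 \/ x = 1 + t * 2.
Proof. by exists (x %/ 2)%Z; lia. Qed.

Definition ev (A : M2) := (A i0 i1 == 0 %[mod 2])%Z.
Definition Ke a b c d := a*d - b*c = 1 /\ cm c 0 2.
Definition K (A : M2) := Ke (A i0 i0) (A i0 i1) (A i1 i0) (A i1 i1).

Lemma Ke_odd a b c d : Ke a b c d -> cm a 1 2 /\ cm d 1 2.
Proof.
case=> h [k hc]; subst c.
have [t [ht|ht]] := par a; have [t' [ht'|ht']] := par d; subst; try lia;
  by split; [exists t | exists t']; ring.
Qed.

Lemma KeM a b c d a' b' c' d' : Ke a b c d -> Ke a' b' c' d' ->
  Ke (a*a'+b*c') (a*b'+b*d') (c*a'+d*c') (c*b'+d*d').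
Proof.
move=> [h1 h2] [h3 h4]; split; last by cgr; ring.
have -> : (a*a'+b*c')*(c*b'+d*d') - (a*b'+b*d')*(c*a'+d*c') = (a*d-b*c)*(a'*d'-b'*c') by ring.
by rewrite h1 h3 mulr1.
Qed.

Lemma KeV a b c d : Ke a b c d -> Ke d (-b) (-c) a.
Proof. move=> [h1 h2]; split; last by cgr; ring. by rewrite -h1; ring. Qed.

Lemma eKe a b c d a' b' c' d' : Ke a b c d -> Ke a' b' c' d' ->
  ((a*b'+b*d') == 0 %[mod 2])%Z = ((b == 0 %[mod 2])%Z == (b' == 0 %[mod 2])%Z).
Proof.
move=> /Ke_odd [[t ->] _] /Ke_odd [_ [t' ->]].
have [u [->|->]] := par b; have [u' [->|->]] := par b'; lia.
Qed.

Lemma KM A B : K A -> K B -> K (A *m B).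
Proof. move=> hA hB; rewrite /K (mk2E A) (mk2E B) mk2M; ents; exact: KeM. Qed.

Lemma KV A : K A -> K (invmx A).
Proof.
move=> h; rewrite /K (mk2E A) inv_mk2; first by ents; apply: KeV.
by case: h.
Qed.

Lemma eM A B : K A -> K B -> ev (A *m B) = (ev A == ev B).
Proof. move=> hA hB; rewrite /ev (mk2E A) (mk2E B) mk2M; ents. exact: (eKe hA hB). Qed.

Lemma eV A : K A -> ev (invmx A) = ev A.
Proof.
move=> h; rewrite /ev (mk2E A) inv_mk2; first by ents; lia.
by case: h.
Qed.

Definition tconjE a b c d : tconj (mk2 a b c d) = mk2 a (b %/ 2)%Z (c * 2) d.
Proof. by rewrite /tconj; ents. Qed.

Lemma tM A B : ev A -> ev B -> tconj (A *m B) = tconj A *m tconj B.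
Proof.
rewrite /ev (mk2E A) (mk2E B); ents.
move: (A i0 i0) (A i0 i1) (A i1 i0) (A i1 i1) (B i0 i0) (B i0 i1) (B i1 i0) (B i1 i1).
move=> a b c d a' b' c' d' /cmP [k ->] /cmP [k' ->].
rewrite mk2M !tconjE mk2M.
rewrite !add0r. have -> : a * (k' * 2) + k * 2 * d' = (a * k' + k * d') * 2 by ring.
rewrite !mulzK //; congr mk2; ring.

Qed.

Lemma tV A : inSL2 A -> ev A -> tconj (invmx A) = invmx (tconj A).
Proof.
rewrite SLE /ev (mk2E A); ents.
move: (A i0 i0) (A i0 i1) (A i1 i0) (A i1 i1) => a b c d /eqP h /cmP [k hb]; subst b.
rewrite inv_mk2 // !tconjE inv_mk2; last by rewrite add0r mulzK //; lia.
rewrite add0r mulzK // (_ : - (k * 2) = (-k) * 2); last by lia.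
by rewrite mulzK //; congr mk2; lia.

Qed.

Lemma t1 : tconj 1%:M = 1%:M.
Proof. by rewrite mk2_1 tconjE mul0r. Qed.

Section Main.
Variables (N r s : nat).
Hypotheses (oN : odd N) (s2 : (2 <= s)%N) (sr : (s <= r)%N).

Definition n : int := N%:Z.
Definition P : int := (2^s)%N%:Z.
Definition Q : int := (2^(r-s))%N%:Z.
Definition P0 : int := (2^(s-2))%N%:Z.

Lemma castNP : ((N * 2^s)%N)%:Z = n * P. Proof. by rewrite PoszM. Qed.
Lemma castR : ((2^r)%N)%:Z = P * Q. Proof. by rewrite /P /Q -PoszM -expnD subnKC. Qed.
Lemma castR1 : ((2^r.+1)%N)%:Z = P * Q * 2.
Proof. by rewrite expnS mulnC PoszM castR. Qed.
Lemma cast4N : ((4 * N)%N)%:Z = 4 * n. Proof. by rewrite PoszM. Qed.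
Lemma P4 : P = P0 * 4.
Proof. by rewrite /P /P0 -[4]/((2^2)%N%:Z) -PoszM -expnD subnK. Qed.

Definition Gp a b c d :=
  [/\ a*d - b*c = 1, cm c 0 (n*P), cm a 1 (n*P), cm d 1 (n*P) & cm c 0 (P*Q)].

Lemma inPhi_mk2 a b c d : inPhi N r s (mk2 a b c d) <-> Gp a b c d.
Proof.
rewrite /inPhi /inGamma1 /inGamma0 !SLE; ents.
rewrite castNP castR; split.
- by case/andP=> /and4P [/eqP h1 /cmP h2 /cmP h3 /cmP h4] /andP [_ /cmP h5].
- case=> h1 h2 h3 h4 h5; apply/andP; split; [apply/and4P; split|apply/andP; split];
    try exact/cmP; exact/eqP.
Qed.

Lemma inPhiP A : inPhi N r s A <-> Gp (A i0 i0) (A i0 i1) (A i1 i0) (A i1 i1).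
Proof. by rewrite {1}(mk2E A); exact: inPhi_mk2. Qed.

Lemma GpM a b c d a' b' c' d' : Gp a b c d -> Gp a' b' c' d' ->
  Gp (a*a'+b*c') (a*b'+b*d') (c*a'+d*c') (c*b'+d*d').
Proof.
case=> d1 c1 a1 e1 f1 [d2 c2 a2 e2 f2]; split; try (cgr; ring).
have -> : (a*a'+b*c')*(c*b'+d*d') - (a*b'+b*d')*(c*a'+d*c') = (a*d-b*c)*(a'*d'-b'*c') by ring.
by rewrite d1 d2 mulr1.
Qed.

Lemma GpV a b c d : Gp a b c d -> Gp d (-b) (-c) a.
Proof. case=> d1 c1 a1 e1 f1; split; try (cgr; ring). by rewrite -d1; ring. Qed.

Lemma inPhi_SL A : inPhi N r s A -> inSL2 A.
Proof. by case/andP=> /and4P []. Qed.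

Lemma grpG : grp (inPhi N r s).
Proof.
split.
- exact: inPhi_SL.
- by rewrite mk2_1 inPhi_mk2; split; try (cgr; ring); ring.
- move=> A B /inPhiP hA /inPhiP hB; rewrite (mk2E A) (mk2E B) mk2M inPhi_mk2.
  exact: GpM.
- move=> A /inPhiP hA; rewrite (mk2E A) inv_mk2; first by rewrite inPhi_mk2; exact: GpV.
  by case: hA.
Qed.

Lemma G_K A : inPhi N r s A -> K A.
Proof.
move/inPhiP=> [h1 [k hc] _ _ _]; split => //.
by exists (k * n * P0 * 2); rewrite hc P4; ring.
Qed.

Definition Hp := fun A => inPhi N r s A && inGamma0up2 A.

Lemma HpE A : Hp A = inPhi N r s A && ev A.
Proof. by rewrite /Hp /inGamma0up2; case H: (inPhi N r s A) => //=; rewrite inPhi_SL. Qed.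

Lemma ev1 : ev 1%:M. Proof. by rewrite /ev mk2_1; ents. Qed.

Lemma grpH : grp Hp.
Proof.
split.
- by move=> A; rewrite HpE => /andP [/inPhi_SL].
- by rewrite HpE ev1 andbT; case: grpG.
- move=> A B; rewrite !HpE => /andP [hA eA] /andP [hB eB].
  by rewrite (gM grpG) // eM ?eA ?eB //; apply: G_K.
- move=> A; rewrite !HpE => /andP [hA eA].
  by rewrite (gV grpG) // eV ?eA //; apply: G_K.
Qed.


Notation G := (inPhi N r s).

Lemma Gconj3 a b c : G a -> G b -> G c -> G (a *m b *m invmx c).
Proof. move=> ha hb hc; apply: (gM grpG); [exact: (gM grpG) | exact: (gV grpG)]. Qed.

Lemma ev3 a b c : G a -> G b -> G c -> ev (a *m b *m invmx c) = ((ev a == ev b) == ev c).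
Proof.
move=> /G_K ha /G_K hb /G_K hc.
by rewrite (eM (KM ha hb) (KV hc)) (eM ha hb) (eV hc).
Qed.

Lemma transfer2 g1 g2 y : G g1 -> G g2 -> G y -> ev g1 = ~~ ev g2 ->
  transfer_rep Hp [:: g1; g2] y =
  if ev y then g1 *m y *m invmx g1 *m (g2 *m y *m invmx g2 *m 1%:M)
  else g1 *m y *m invmx g2 *m (g2 *m y *m invmx g1 *m 1%:M).
Proof.
move=> h1 h2 hy e12; rewrite /transfer_rep /= !HpE !Gconj3 // !ev3 // e12.
by case: (ev y); case: (ev g2).
Qed.

Lemma tr_H g1 g2 y : G g1 -> G g2 -> G y -> ev g1 = ~~ ev g2 ->
  Hp (transfer_rep Hp [:: g1; g2] y).
Proof.
move=> h1 h2 hy e12; rewrite transfer2 //.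
have HC : forall a b c, G a -> G b -> G c -> ((ev a == ev b) == ev c) -> Hp (a *m b *m invmx c).
  by move=> a b c ha hb hc he; rewrite HpE Gconj3 // ev3.
case E: (ev y); (apply: (gM grpH); [|apply: (gM grpH); [|exact: (gone grpH)]]);
  apply: HC => //; by rewrite ?e12 E; case: (ev g2).
Qed.

Lemma tG A : Hp A -> G (tconj A).
Proof.
rewrite HpE => /andP [/inPhiP [h1 c1 a1 d1 f1] /cmP [k hb]].
rewrite (mk2E A) tconjE inPhi_mk2 hb add0r mulzK //.
rewrite hb add0r in h1; split; try (cgr; ring). lia.
Qed.

Lemma tM' A B : Hp A -> Hp B -> tconj (A *m B) = tconj A *m tconj B.
Proof. by rewrite !HpE => /andP [_ ?] /andP [_ ?]; apply: tM. Qed.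

Lemma tV' A : Hp A -> tconj (invmx A) = invmx (tconj A).
Proof. by move=> h; apply: tV; [apply: (gS grpH) | move: h; rewrite HpE => /andP []]. Qed.

Ltac hp := repeat first [ apply: (gM grpH) | apply: (gV grpH) ]; done.

Lemma t_cs y : in_commsub Hp y -> in_commsub G (tconj y).
Proof.
elim=> [|a b y' Ha Hb Hy IH]; first by rewrite t1; constructor.
have Hy' := cs_G grpH Hy.
rewrite tM'; last exact: Hy'; last by rewrite /commg2; hp.
rewrite /commg2 !tM' ?tV'; try hp.
by apply: commsubM => //; apply: tG.
Qed.

Lemma ab_t X Y : Hp X -> Hp Y -> ab_eq Hp X Y -> ab_eq G (tconj X) (tconj Y).
Proof.
move=> hX hY; rewrite /ab_eq => h.
rewrite -tV' // -tM' //; last by hp.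
exact: t_cs.
Qed.

Definition Ap a b c d := [/\ a*d - b*c = 1, cm c 0 (n*(P*Q*2)) & cm b 0 2].

Lemma alphaP delta (al : M2) : nebentypus_alpha N r delta al ->
  Ap (al i0 i0) (al i0 i1) (al i1 i0) (al i1 i1).
Proof.
rewrite /nebentypus_alpha /inGamma1 /inGamma0 /inGamma0up2 !SLE cast4N castR1.
case/and4P=> /and4P [/eqP h1 /cmP [k hc] _ _] /andP [_ hc2] /andP [_ /cmP hb] _.
split => //.
have : (n * (P*Q*2) %| al i1 i0)%Z.
  rewrite Gauss_dvdz; first (apply/andP; split).
  - by apply/dvdzP; exists (k*4); rewrite hc; ring.
  - by move: hc2; rewrite eqz_mod_dvd subr0.
  - rewrite -castR1 /n coprimezE /=; apply: coprimeXr.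
    by rewrite coprime_sym coprime2n.
by case/dvdzP=> q hq; exists q; rewrite hq; ring.
Qed.

Lemma Ap_K a b c d : Ap a b c d -> K (mk2 a b c d) /\ ev (mk2 a b c d).
Proof.
case=> h1 [k hc] hb; rewrite /K /ev; ents; split; last exact/cmP.
by split => //; exists (k*n*P*Q); rewrite hc; ring.
Qed.

Lemma conjG_mk2 a b c d p q u v : Ap a b c d -> G (mk2 p q u v) ->
  G (mk2 a b c d *m mk2 p q u v *m invmx (mk2 a b c d)).
Proof.
case=> h1 [k hc] hb /inPhi_mk2 [h2 c2 a2 d2 f2].
have cnP : cm c 0 (n*P) by exists (k*Q*2); rewrite hc; ring.
have cPQ : cm c 0 (P*Q) by exists (k*n*2); rewrite hc; ring.
rewrite inv_mk2 // !mk2M inPhi_mk2; split.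
- match goal with |- ?x * ?y - ?z * ?w = 1 =>
    have -> : x*y - z*w = (a*d-b*c)*(p*v-q*u)*(a*d-b*c) by ring end.
  by rewrite h1 h2 !mulr1.
- by cgr; ring.
- apply: (@cm_trans _ (a*d)); first by cgr; ring.
  exact: (det_cm h1 cnP).
- apply: (@cm_trans _ (a*d)); first by cgr; ring.
  exact: (det_cm h1 cnP).
- by cgr; ring.
Qed.

Lemma beta_mk2 a b c d : Ap a b c d ->
  G (tconj (mk2 a b c d) *m invmx (mk2 a b c d)).
Proof.
case=> h1 [k hc] [m hb].
have cnP : cm c 0 (n*P) by exists (k*Q*2); rewrite hc; ring.
have cPQ : cm c 0 (P*Q) by exists (k*n*2); rewrite hc; ring.
rewrite inv_mk2 // tconjE hb add0r mulzK // mk2M inPhi_mk2.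
rewrite hb add0r in h1.
split.
- match goal with |- ?x * ?y - ?z * ?w = 1 =>
    have -> : x*y - z*w = (a*d - m*(c*2))*(a*d-(m*2)*c) by ring end.
  rewrite h1 mulr1; lia.
- by cgr; ring.
- apply: (@cm_trans _ (a*d)); first by cgr; ring.
  exact: (det_cm h1 cnP).
- apply: (@cm_trans _ (a*d)); first by cgr; ring.
  exact: (det_cm h1 cnP).
- by cgr; ring.
Qed.

Lemma inv_h (al g : M2) : al \in unitmx -> g \in unitmx ->
  invmx (al *m g *m invmx al *m invmx g) = g *m al *m invmx g *m invmx al.
Proof.
move=> Ua Ug; apply: inv_uniq.
  by rewrite !unitmx_mul !unitmx_inv Ua Ug.
rewrite !mulmxA (mulmxKV Ug) (mulmxKV Ua) (mulmxK Ug) (mulmxV Ua) //.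
Qed.

Lemma conj_h (al g z : M2) : al \in unitmx -> g \in unitmx ->
  al *m (g *m z *m invmx g) *m invmx al =
  (al *m g *m invmx al *m invmx g) *m (g *m (al *m z *m invmx al) *m invmx g)
    *m invmx (al *m g *m invmx al *m invmx g).
Proof.
move=> Ua Ug; rewrite inv_h // !mulmxA.
do 3 rewrite ?(mulmxKV Ug) ?(mulmxKV Ua).
done.
Qed.

Lemma Hh (al g : M2) : (forall z, G z -> G (al *m z *m invmx al)) ->
  (forall z, G z -> ev (al *m z *m invmx al) = ev z) -> G g ->
  Hp (al *m g *m invmx al *m invmx g).
Proof.
move=> cG cev hg; rewrite HpE (gM grpG) ?cG ?(gV grpG) //=.
by rewrite (eM (G_K (cG _ hg)) (KV (G_K hg))) cev // (eV (G_K hg)) eqxx.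
Qed.

Lemma transfer_conj (al x1 x2 x : M2) : al \in unitmx ->
  (forall z, G z -> G (al *m z *m invmx al)) ->
  (forall z, G z -> ev (al *m z *m invmx al) = ev z) ->
  G x1 -> G x2 -> G x -> ev x1 = ~~ ev x2 ->
  ab_eq Hp (transfer_rep Hp [:: x1; x2] (al *m x *m invmx al))
           (al *m transfer_rep Hp [:: x1; x2] x *m invmx al).
Proof.
move=> Ua cG cev h1 h2 hx e12.
have U1 := gU grpG h1; have U2 := gU grpG h2.
have hy := cG _ hx.
rewrite !transfer2 // cev // !mulmx1.
have HC : forall a b c, G a -> G b -> G c -> ((ev a == ev b) == ev c) -> Hp (a *m b *m invmx c).
  by move=> a b c ha hb hc he; rewrite HpE Gconj3 // ev3.
case E: (ev x).
- have -> : al *m (x1 *m x *m invmx x1 *m (x2 *m x *m invmx x2)) *m invmx al =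
     (al *m (x1 *m x *m invmx x1) *m invmx al) *m (al *m (x2 *m x *m invmx x2) *m invmx al).
    by rewrite !mulmxA (mulmxKV Ua).
  rewrite (conj_h _ Ua U1) (conj_h _ Ua U2).
  have HA : forall g, G g -> Hp (g *m (al *m x *m invmx al) *m invmx g).
    by move=> g hg; apply: HC => //; rewrite cev // E; case: (ev g).
  have Hh1 := Hh cG cev h1; have Hh2 := Hh cG cev h2.
  have HA1 := HA _ h1; have HA2 := HA _ h2.
  have HJ : forall h a, Hp h -> Hp a -> Hp (h *m a *m invmx h).
    by move=> h a hh ha; apply: (gM grpH); [apply: (gM grpH)|apply: (gV grpH)].
  apply: (ab_mul grpH); [exact: HA1 | exact: HJ | exact: HA2 | exact: HJ | exact: (ab_conjR grpH) | exact: (ab_conjR grpH)].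
- have -> : al *m (x1 *m x *m invmx x2 *m (x2 *m x *m invmx x1)) *m invmx al =
    (al *m x1 *m invmx al *m invmx x1) *m
    (x1 *m (al *m x *m invmx al) *m invmx x2 *m (x2 *m (al *m x *m invmx al) *m invmx x1))
    *m invmx (al *m x1 *m invmx al *m invmx x1).
    rewrite inv_h // !mulmxA.
    by do 4 rewrite ?(mulmxKV U1) ?(mulmxKV U2) ?(mulmxKV Ua).
  apply: (ab_conjR grpH); first exact: Hh.
  by apply: (gM grpH); apply: HC => //; rewrite cev // E e12; case: (ev x2).
Qed.

Lemma T2 T : right_transversal G Hp T ->
  exists x1 x2, [/\ T = [:: x1; x2], G x1, G x2 & ev x1 = ~~ ev x2].
Proof.
case=> allT cnt.
have Gu : G (mk2 1 1 0 1) by rewrite inPhi_mk2; split; try (cgr; ring); ring.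
have c1 := cnt _ (gone grpG); have cu := cnt _ Gu.
have E1 : count (fun g : M2 => Hp (1%:M *m invmx g)) T = count ev T.
  apply: eq_in_count => g /(allP allT) hg /=.
  by rewrite HpE mul1mx (gV grpG) // (eV (G_K hg)).
have Eu : count (fun g : M2 => Hp (mk2 1 1 0 1 *m invmx g)) T = count (predC ev) T.
  apply: eq_in_count => g /(allP allT) hg /=.
  rewrite HpE (gM grpG) ?(gV grpG) //= (eM (G_K Gu) (KV (G_K hg))) (eV (G_K hg)).
  have -> : ev (mk2 1 1 0 1) = false by rewrite /ev e01.
  by case: (ev g).
have sz : size T = 2%N by rewrite -(count_predC ev) -E1 -Eu c1 cu.
rewrite E1 in c1; clear cnt E1 Eu cu; case: T allT sz c1 => [|x1 [|x2 [|? ?]]] //= /and3P [h1 h2 _] _ c1.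
exists x1, x2; split => //.
move: c1; rewrite addn0.
by case: (ev x1); case: (ev x2).
Qed.

Lemma main_sec delta (al : M2) : nebentypus_alpha N r delta al ->
  forall T, right_transversal G Hp T -> forall x, G x ->
  ab_eq G (atkinU_rep N r s T (al *m x *m invmx al))
          (al *m atkinU_rep N r s T x *m invmx al).
Proof.
move=> hal T hT x hx.
have Ap' := alphaP hal.
have SLa : inSL2 al by case/and4P: hal => /and4P [].
have Ua := SL_unit SLa.
have cG : forall z, G z -> G (al *m z *m invmx al).
  move=> z hz; rewrite (mk2E al) (mk2E z); apply: conjG_mk2 => //; by rewrite -mk2E.
have [Kal eal] : K al /\ ev al by have := Ap_K Ap'; rewrite -mk2E.
have cev : forall z, G z -> ev (al *m z *m invmx al) = ev z.
  move=> z hz; have Kz := G_K hz.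
  by rewrite (eM (KM Kal Kz) (KV Kal)) (eM Kal Kz) (eV Kal) eal; case: (ev z).
have [x1 [x2 [ET h1 h2 e12]]] := T2 hT; subst T.
rewrite /atkinU_rep.
have HQ : Hp (transfer_rep Hp [:: x1; x2] x) := tr_H h1 h2 hx e12.
move: HQ; set Qx := transfer_rep Hp [:: x1; x2] x => HQ.
have HQy : Hp (transfer_rep Hp [:: x1; x2] (al *m x *m invmx al)) := tr_H h1 h2 (cG _ hx) e12.
move: HQ; rewrite HpE => /andP [GQ eQ].
have HcQ : Hp (al *m Qx *m invmx al) by rewrite HpE cG //= cev.
have HQ : Hp Qx by rewrite HpE GQ.
have step1 := ab_t HQy HcQ (transfer_conj Ua cG cev h1 h2 hx e12).
have eaQ : ev (al *m Qx) by rewrite (eM Kal (G_K GQ)) eal eQ.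
have step2 : tconj (al *m Qx *m invmx al) = tconj al *m tconj Qx *m invmx (tconj al).
  by rewrite tM // ?(eV Kal) // tM // tV.
have Hb : G (tconj al *m invmx al) by rewrite (mk2E al); exact: beta_mk2.
set b := tconj al *m invmx al in Hb.
have Ub := gU grpG Hb.
have Ea' : tconj al = b *m al by rewrite /b mulmxKV.
have Hz := tG HQ.
have step3 : tconj al *m tconj Qx *m invmx (tconj al) =
    b *m (al *m tconj Qx *m invmx al) *m invmx b.
  have -> : invmx (tconj al) = invmx al *m invmx b.
    apply: inv_uniq; first by rewrite Ea' unitmx_mul Ub Ua.
    by rewrite Ea' !mulmxA (mulmxK Ua) (mulmxV Ub).
  by rewrite Ea' !mulmxA.
apply: (ab_trans grpG _ step1); first exact: tG.
rewrite step2 step3.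
by apply: (ab_conjL grpG) => //; apply: cG.
Qed.

End Main.

Theorem lemma3p5 (N r s : nat) :
  odd N -> (0 < N)%N -> (2 <= s)%N -> (s <= r)%N ->
  forall (delta : int), (delta == 1 %[mod 4])%Z ->
  forall (alpha : M2), nebentypus_alpha N r delta alpha ->
  forall (T : seq M2),
    right_transversal (inPhi N r s)
      (fun A => inPhi N r s A && inGamma0up2 A) T ->
  forall x : M2, inPhi N r s x ->
    ab_eq (inPhi N r s)
      (atkinU_rep N r s T (alpha *m x *m invmx alpha))
      (alpha *m atkinU_rep N r s T x *m invmx alpha).
Proof.
move=> oN _ s2 sr delta _ alpha hal T hT x hx.
exact: (main_sec oN s2 sr hal hT hx).
Qed.
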